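(* Let $G=\{0,g_1,\dots,g_k\}$ be a finite abelian group (with $g_1,\dots,g_k$ its distinct nonzero elements) such that $g_1+\cdots+g_k=0$, and let $\beta$ be a bicharacter of $G$. Let $A$ be a $G$-graded $\beta$-commutative algebra with $A_0=K$, and suppose that the graded monomial $x_{1}^{(g_1)}x_{2}^{(g_2)}\cdots x_{k}^{(g_k)}$ is not a graded polynomial identity of $A$ (i.e. there exist $a_{j}\in A_{g_j}$ with $a_1\cdots a_k\neq 0$). Then $\dim A=|G|$ and $A$ is isomorphic, as a $G$-graded algebra, to a twisted group algebra $K^\alpha G$ for some 2-cocycle $\alpha$.
   Context: All algebras are associative with unit over an algebraically closed field $K$ of characteristic $0$; $G$ is a finite abelian group written additively. A bicharacter of $G$ is a map $\beta\colon G\times G\to K^*$ with $\beta(g,h)=\beta(h,g)^{-1}$, $\beta(g,h+k)=\beta(g,h)\beta(g,k)$, $\beta(g+k,h)=\beta(g,h)\beta(k,h)$. A $G$-graded algebra $C=\bigoplus_g C_g$ is $\beta$-commutative if $c_gc_h=\beta(g,h)c_hc_g$ for all $g,h\in G$, $c_g\in C_g$, $c_h\in C_h$. For a 2-cocycle $\alpha\colon G\times G\to K^*$, the twisted group algebra $K^\alpha G$ has basis $\{X_g\}_{g\in G}$ with $X_gX_h=\alpha(g,h)X_{g+h}$ and grading $(K^\alpha G)_g=KX_g$. Graded polynomial identities are taken in the free $G$-graded algebra on variables $x_i^{(g)}$ of homogeneous degree $g$. *)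

(* Defs.v *)
From HB Require Import structures.
From mathcomp Require Import all_boot all_order all_algebra.
Set Implicit Arguments. Unset Strict Implicit. Unset Printing Implicit Defensive.
Import GRing.Theory.
Local Open Scope ring_scope.

Definition bicharacter (G : finZmodType) (K : fieldType) (beta : G -> G -> K) :=
  [/\ forall g h, beta g h != 0,
      forall g h, beta g h = (beta h g)^-1,
      forall g h k, beta g (h + k) = beta g h * beta g k
    & forall g h k, beta (g + k) h = beta g h * beta k h].

Definition two_cocycle (G : finZmodType) (K : fieldType) (alpha : G -> G -> K) :=
  (forall g h, alpha g h != 0) /\
  (forall g h k, alpha g h * alpha (g + h) k = alpha h k * alpha g (h + k)).

Definition is_grading (G : finZmodType) (K : fieldType) (A : algType K)
    (Agr : G -> pred A) :=
  [/\
      (forall g, 0 \in Agr g) /\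
      (forall g x y, x \in Agr g -> y \in Agr g -> x + y \in Agr g) /\
      (forall g (c : K) x, x \in Agr g -> c *: x \in Agr g),
      forall a : A, exists c : G -> A, (forall g, c g \in Agr g) /\ a = \sum_(g : G) c g,
      forall c : G -> A, (forall g, c g \in Agr g) -> \sum_(g : G) c g = 0 ->
        forall g, c g = 0
    &
      forall g h x y, x \in Agr g -> y \in Agr h -> x * y \in Agr (g + h)].

Definition beta_commutative (G : finZmodType) (K : fieldType) (A : algType K)
    (Agr : G -> pred A) (beta : G -> G -> K) :=
  forall g h x y, x \in Agr g -> y \in Agr h -> x * y = beta g h *: (y * x).

Definition degree0_is_K (G : finZmodType) (K : fieldType) (A : algType K)
    (Agr : G -> pred A) :=
  forall a : A, a \in Agr 0 <-> exists c : K, a = c%:A.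

Definition has_dim (K : fieldType) (A : algType K) (n : nat) :=
  exists e : 'I_n -> A,
    (forall c : 'I_n -> K, \sum_(i < n) c i *: e i = 0 -> forall i, c i = 0) /\
    (forall a : A, exists c : 'I_n -> K, a = \sum_(i < n) c i *: e i).

(* The twisted group algebra K^alpha G, realized on {ffun G -> K}
   (u <-> sum_g u g X_g), with X_g X_h = alpha g h X_(g+h). *)
Definition tw_basis (G : finZmodType) (K : fieldType) (g : G) : {ffun G -> K} :=
  [ffun x => (x == g)%:R].

Definition tw_mul (G : finZmodType) (K : fieldType) (alpha : G -> G -> K)
    (u v : {ffun G -> K}) : {ffun G -> K} :=
  [ffun k => \sum_(g : G) alpha g (k - g) * u g * v (k - g)].

Definition graded_iso_from_twisted (G : finZmodType) (K : fieldType) (A : algType K)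
    (Agr : G -> pred A) (alpha : G -> G -> K) (f : {ffun G -> K} -> A) :=
  [/\ forall (c : K) (u v : {ffun G -> K}),
        f [ffun x => c * u x + v x] = c *: f u + f v,
      bijective f,
      forall u v, f (tw_mul alpha u v) = f u * f v
    & forall (g : G) (c : K), f [ffun x => c * tw_basis K g x] \in Agr g].

(* Main.v *)
Require Import Defs.
From HB Require Import structures.
From mathcomp Require Import all_boot all_order all_algebra.
From mathcomp Require Import ring.
Import GRing.Theory.
Local Open Scope ring_scope.

Theorem theorem4p2 (K : closedFieldType) (G : finZmodType) (A : algType K)
    (Agr : G -> pred A) (beta : G -> G -> K) (s : seq G) :
  [pchar K] =i pred0 ->
  (* s = [:: g_1; ...; g_k] lists the distinct nonzero elements of G *)
  uniq s -> (forall g : G, (g \in s) = (g != 0)) ->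
  \sum_(g <- s) g = 0 ->
  bicharacter beta ->
  is_grading Agr ->
  beta_commutative Agr beta ->
  degree0_is_K Agr ->
  (* x_1^(g_1) ... x_k^(g_k) is not a graded identity of A *)
  (exists a : G -> A, (forall g, a g \in Agr g) /\ \prod_(g <- s) a g != 0) ->
  has_dim A #|G| /\
  exists alpha : G -> G -> K, two_cocycle alpha /\
    exists f : {ffun G -> K} -> A, graded_iso_from_twisted Agr alpha f.
Proof.
move=> _ Huniq Hs Hsum [bne0 _ _ _] [[A0 [AD AZ]] Adec Adir AM] Hcomm Hdeg [a [Ha HP]].
have A1 : (1 : A) \in Agr 0 by apply/Hdeg; exists 1; rewrite scale1r.
have Aprod : forall t : seq G, \prod_(h <- t) a h \in Agr (\sum_(h <- t) h).
  by elim=> [|h t IH]; rewrite ?big_nil // !big_cons; apply: AM.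
have [c Pc] : exists c : K, \prod_(h <- s) a h = c%:A.
  by apply/Hdeg; rewrite -Hsum; exact: Aprod.
have c0 : c != 0 by apply: contra HP => /eqP e; rewrite Pc e scale0r.
have one0 : (1 : A) != 0.
  by apply: contra HP => /eqP e; rewrite -[X in X == _]mulr1 e mulr0.
have Hinv : forall g, g != 0 -> exists2 y, y \in Agr (- g) & a g * y = 1.
  move=> g; rewrite -Hs => gs.
  have [s1 [s2 Es]] : exists s1 s2, s = s1 ++ g :: s2.
    by case/splitPr: gs => s1 s2; exists s1, s2.
  rewrite Es big_cat big_cons /= in Pc.
  rewrite Es big_cat big_cons /= in Hsum.
  have HL := Aprod s1; have HR := Aprod s2.
  have HgR := AM _ _ _ _ (Ha g) HR.
  rewrite (Hcomm _ _ _ _ HL HgR) -mulrA in Pc.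
  set L := \prod_(h <- s1) a h in Pc HL.
  set R := \prod_(h <- s2) a h in Pc HR HgR.
  set b := beta _ _ in Pc.
  have b0 : b != 0 by apply: bne0.
  have E : a g * (R * L) = (b^-1 * c) *: 1.
    by rewrite -[a g * _](scalerK b0) Pc scalerA.
  exists ((b^-1 * c)^-1 *: (R * L)).
    apply: AZ.
    have -> : - g = \sum_(h <- s2) h + \sum_(h <- s1) h.
      move: Hsum; set l := \sum_(h <- s1) h; set r := \sum_(h <- s2) h => H.
      have : g + (r + l) == 0 by rewrite [r + l]addrC addrCA H.
      by rewrite addr_eq0 => /eqP ->; rewrite opprK.
    exact: AM.
  rewrite -scalerAr E scalerA mulVf ?scale1r //.
  by rewrite mulf_neq0 // invr_neq0.
pose x g := if g == 0 then (1 : A) else a g.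
have Hx : forall g, x g \in Agr g.
  by move=> g; rewrite /x; case: eqP => [->|].
have Hxinv : forall g, exists2 y, y \in Agr (- g) & x g * y = 1.
  move=> g; rewrite /x; case: eqP => [->|/eqP g0].
    by exists 1; rewrite ?oppr0 ?mulr1.
  exact: Hinv.
have Hcoord : forall g y, y \in Agr g -> exists k, y = k *: x g.
  move=> g y Hy; have [z Hz xz] := Hxinv g.
  have /Hdeg [k Hk] : z * y \in Agr 0 by rewrite -(addNr g); apply: AM.
  by exists k; rewrite -[y]mul1r -xz -mulrA Hk -scalerAr mulr1.
have x0 : forall g, x g != 0.
  move=> g; have [z _ xz] := Hxinv g; apply: contra one0 => /eqP e.
  by rewrite -xz e mul0r.
have Hind : forall k : G -> K, \sum_g k g *: x g = 0 -> forall g, k g = 0.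
  move=> k Hk g.
  have := Adir (fun g => k g *: x g) (fun g => AZ _ _ _ (Hx g)) Hk g.
  by move/eqP; rewrite scaler_eq0 (negbTE (x0 g)) orbF => /eqP.
have Hspan : forall y : A, exists k : G -> K, y = \sum_g k g *: x g.
  move=> y; have [cc [Hcc ->]] := Adec y.
  have [k Hk] := fin_all_exists (fun g => Hcoord g _ (Hcc g)).
  by exists k; apply: eq_bigr => g _; exact: Hk.
have [alpha Halpha] : exists alpha : G -> G -> K,
    forall g h, x g * x h = alpha g h *: x (g + h).
  have Hmul : forall g h, exists k, x g * x h = k *: x (g + h).
    by move=> g h; apply: Hcoord; apply: AM.
  exact: fin_all_exists (fun g => fin_all_exists (Hmul g)).
split.
  exists (fun i => x (enum_val i)); split.
  - move=> k Hk i.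
    have H : \sum_g k (enum_rank g) *: x g = 0.
      rewrite -[RHS]Hk (reindex _ (onW_bij _ (@enum_val_bij G))) /=.
      by apply: eq_bigr => j _; rewrite enum_valK.
    by have := Hind _ H (enum_val i); rewrite enum_valK.
  - move=> y; have [k ->] := Hspan y; exists (fun i => k (enum_val i)).
    by rewrite (reindex _ (onW_bij _ (@enum_val_bij G))).
exists alpha; split.
  split.
  - move=> g h; apply/eqP => a0; have := Halpha g h; rewrite a0 scale0r => e.
    have [z _ xz] := Hxinv h.
    by move: (x0 g); rewrite -[x g]mulr1 -xz mulrA e mul0r eqxx.
  - move=> g h k; have := mulrA (x g) (x h) (x k).
    rewrite (Halpha h k) -scalerAr (Halpha g (h + k)) scalerA.
    rewrite (Halpha g h) -scalerAl (Halpha (g + h) k) scalerA addrA.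
    move/eqP; rewrite -subr_eq0 -scalerBl scaler_eq0 (negbTE (x0 _)) orbF.
    by rewrite subr_eq0 => /eqP ->.
pose f (u : {ffun G -> K}) := \sum_g u g *: x g.
have finj : injective f.
  move=> u v /eqP; rewrite -subr_eq0 /f -sumrB.
  under eq_bigr do rewrite -scalerBl.
  move/eqP/Hind => H; apply/ffunP => g; apply/eqP; by rewrite -subr_eq0 H.
have fsurj : forall y, exists u, f u == y.
  move=> y; have [k ->] := Hspan y; exists [ffun g => k g]; rewrite /f.
  by apply/eqP; apply: eq_bigr => g _; rewrite ffunE.
exists f; split.
- move=> k u v; rewrite /f scaler_sumr -big_split; apply: eq_bigr => g _.
  by rewrite ffunE scalerDl scalerA.
- exists (fun y => xchoose (fsurj y)).
    by move=> u; apply: finj; exact/eqP/(xchooseP (fsurj (f u))).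
  by move=> y; exact/eqP/(xchooseP (fsurj y)).
- move=> u v; rewrite /f /tw_mul mulr_suml.
  under eq_bigr => k _ do rewrite ffunE scaler_suml.
  rewrite exchange_big /=; apply: eq_bigr => g _.
  rewrite mulr_sumr (reindex_inj (addrI g)) /=; apply: eq_bigr => h _.
  rewrite [g + h]addrC addrK -scalerAl -scalerAr Halpha !scalerA addrC.
  congr (_ *: _); ring.
- move=> g k; rewrite /f (bigD1 g) //= big1 ?addr0.
    by rewrite /tw_basis !ffunE eqxx mulr1; exact: AZ.
  by move=> h hg; rewrite /tw_basis !ffunE (negbTE hg) mulr0 scale0r.
Qed.
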